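(* Let $M$ be a $4$-dimensional manifold with local coordinates $(x^1,x^2,x^3,x^4)$ and coordinate frame $e_i=\partial/\partial x^i$. Let $g$ be a Riemannian metric whose components $g_{ij}=g(e_i,e_j)$ are \[(g_{ij})=\begin{pmatrix} A&B&C&B\\ B&A&B&C\\ C&B&A&B\\ B&C&B&A\end{pmatrix},\] where $A,B,C$ are smooth functions with $A>C>B>0$. Let $Q$ be the $(1,1)$-tensor with components $Q_j^k$ given by the matrix with rows $(0,1,0,0),(0,0,1,0),(0,0,0,1),(1,0,0,0)$, and let $P=Q^2$, whose component matrix $(P_j^k)$ has rows $(0,0,1,0),(0,0,0,1),(1,0,0,0),(0,1,0,0)$. Then $(M,g,P)$ is a Riemannian almost product manifold belonging to the class $\mathcal{W}_1\oplus\mathcal{W}_2$, i.e. the tensor $F(x,y,z)=g((\nabla_xP)y,z)$ satisfies \[F(x,y,Pz)+F(y,z,Px)+F(z,x,Py)=0\] for all vector fields $x,y,z$ (equivalently, the Nijenhuis tensor of $P$ vanishes).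
   Context: $\nabla$ denotes the Levi-Civita connection of $g$. One has $Q^4=\mathrm{id}$, $Q^2\neq\pm\mathrm{id}$, $g(Qx,Qy)=g(x,y)$, hence $P^2=\mathrm{id}$, $P\neq\pm\mathrm{id}$, $g(Px,Py)=g(x,y)$, $\mathrm{tr}P=0$. In the Staikova–Gribachev classification of such manifolds, the class $\mathcal{W}_1\oplus\mathcal{W}_2$ (Riemannian product manifolds) is characterized by $F(x,y,Pz)+F(y,z,Px)+F(z,x,Py)=0$. *)

(* Defs.v *)
From HB Require Import structures.
From mathcomp Require Import all_boot all_order all_algebra.
From mathcomp Require Import all_classical all_reals topology normedtype derive.
Set Implicit Arguments. Unset Strict Implicit. Unset Printing Implicit Defensive.
Import Order.TTheory GRing.Theory Num.Theory.
Import numFieldNormedType.Exports.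
Local Open Scope ring_scope.
Local Open Scope classical_set_scope.

Definition pt (R : realType) := 'rV[R]_4.

Definition ecoord (R : realType) (i : 'I_4) : 'rV[R]_4 := delta_mx 0 i.

Definition pd (R : realType) (f : 'rV[R]_4 -> R) (i : 'I_4) (p : 'rV[R]_4) : R :=
  derive f p (ecoord R i).

Definition iterD (R : realType) (vs : seq 'rV[R]_4) (f : 'rV[R]_4 -> R)
  : 'rV[R]_4 -> R :=
  foldr (fun v g => fun q => derive g q v) f vs.

Definition smooth_on (R : realType) (U : set 'rV[R]_4) (f : 'rV[R]_4 -> R) :=
  forall (vs : seq 'rV[R]_4) (v : 'rV[R]_4) (p : 'rV[R]_4),
    U p -> derivable (iterD vs f) p v.

(* metric components g_ij = g(e_i,e_j): circulant matrix with rows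
   (A B C B), (B A B C), (C B A B), (B C B A) *)
Definition gmat (R : realType) (A B C : 'rV[R]_4 -> R) (p : 'rV[R]_4)
  : 'M[R]_4 :=
  \matrix_(i < 4, j < 4)
    match ((i + 4 - j) %% 4)%N with
    | 0%N => A p
    | 2%N => C p
    | _ => B p
    end.

(* Q_j^k (row j, column k): rows (0,1,0,0),(0,0,1,0),(0,0,0,1),(1,0,0,0) *)
Definition Qmat (R : realType) : 'M[R]_4 :=
  \matrix_(j < 4, k < 4) (((k : nat) == ((j + 1) %% 4)%N) : nat)%:R.

Definition Pmat (R : realType) : 'M[R]_4 := Qmat R *m Qmat R.

Definition Gamma (R : realType) (A B C : 'rV[R]_4 -> R) (p : 'rV[R]_4)
  (l i m : 'I_4) : R :=
  2^-1 * \sum_(s < 4) invmx (gmat A B C p) l s *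
    (pd (fun q => gmat A B C q m s) i p + pd (fun q => gmat A B C q i s) m p
     - pd (fun q => gmat A B C q i m) s p).

Definition nablaP (R : realType) (A B C : 'rV[R]_4 -> R) (p : 'rV[R]_4)
  (i j l : 'I_4) : R :=
  pd (fun _ => Pmat R j l) i p
  + \sum_(m < 4) Gamma A B C p l i m * Pmat R j m
  - \sum_(m < 4) Gamma A B C p m i j * Pmat R m l.

(* F_{ijk} = F(e_i,e_j,e_k) = g((nabla_{e_i} P) e_j, e_k) *)
Definition Fcomp (R : realType) (A B C : 'rV[R]_4 -> R) (p : 'rV[R]_4)
  (i j k : 'I_4) : R :=
  \sum_(l < 4) nablaP A B C p i j l * gmat A B C p l k.

(* F_p(x,y,z) for tangent vectors x,y,z at p (components in the frame e_i) *)
Definition Ften (R : realType) (A B C : 'rV[R]_4 -> R) (p : 'rV[R]_4)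
  (x y z : 'rV[R]_4) : R :=
  \sum_(i < 4) \sum_(j < 4) \sum_(k < 4) x 0 i * y 0 j * z 0 k * Fcomp A B C p i j k.

Definition Pvec (R : realType) (z : 'rV[R]_4) : 'rV[R]_4 := z *m Pmat R.

(* Main.v *)
Require Import Defs.
From HB Require Import structures.
From mathcomp Require Import all_boot all_order all_algebra.
From mathcomp Require Import all_classical all_reals topology normedtype derive.
From mathcomp Require Import ring lra.
Import Order.TTheory GRing.Theory Num.Theory.
Import numFieldNormedType.Exports.
Local Open Scope ring_scope.
Set Implicit Arguments. Unset Strict Implicit.

Notation o0 := (@Ordinal 4 0 isT).
Notation o1 := (@Ordinal 4 1 isT).
Notation o2 := (@Ordinal 4 2 isT).
Notation o3 := (@Ordinal 4 3 isT).

Lemma sum4 (V : nmodType) (F : 'I_4 -> V) :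
  \sum_(i < 4) F i = F o0 + F o1 + F o2 + F o3.
Proof.
rewrite !big_ord_recl big_ord0 addr0 !addrA.
by congr (F _ + F _ + F _ + F _); apply: val_inj.
Qed.

Definition sgn (n : nat) : nat := match n with 0 => 2 | 1 => 3 | 2 => 0 | _ => 1 end.
Lemma sgn_lt (n : nat) : (sgn n < 4)%N. Proof. by case: n => [|[|[|]]]. Qed.
Definition sg (i : 'I_4) : 'I_4 := Ordinal (sgn_lt i).
Lemma sgK (i : 'I_4) : sg (sg i) = i.
Proof. apply: val_inj; by case: i => [[|[|[|[|]]]]]. Qed.
Lemma sg0 : sg o0 = o2. Proof. exact: val_inj. Qed.
Lemma sg1 : sg o1 = o3. Proof. exact: val_inj. Qed.
Lemma sg2 : sg o2 = o0. Proof. exact: val_inj. Qed.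
Lemma sg3 : sg o3 = o1. Proof. exact: val_inj. Qed.

Lemma ord4P (P : 'I_4 -> Prop) : P o0 -> P o1 -> P o2 -> P o3 -> forall i, P i.
Proof.
move=> H0 H1 H2 H3 [[|[|[|[|n]]]] Hn] //.
- by rewrite (bool_irrelevance Hn isT).
- by rewrite (bool_irrelevance Hn isT).
- by rewrite (bool_irrelevance Hn isT).
- by rewrite (bool_irrelevance Hn isT).
Qed.

Lemma Pmat_E (R : realType) (j k : 'I_4) : Pmat R j k = (k == sg j)%:R.
Proof.
rewrite /Pmat mxE sum4 !mxE.
move: j k; apply: ord4P; apply: ord4P => /=; ring.
Qed.

Lemma eq_sg (l m : 'I_4) : (l == sg m) = (m == sg l).
Proof. by apply/eqP/eqP => ->; rewrite sgK. Qed.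

Lemma sum_sgl (R : realType) (f : 'I_4 -> R) (j : 'I_4) :
  \sum_(m < 4) f m * (m == sg j)%:R = f (sg j).
Proof.
rewrite (bigD1 (sg j)) //= eqxx mulr1 big1 ?addr0 // => m /negbTE ->.
by rewrite mulr0.
Qed.

Lemma gmat_sym (R : realType) (A B C : 'rV[R]_4 -> R) q (i j : 'I_4) :
  gmat A B C q i j = gmat A B C q j i.
Proof. rewrite !mxE; move: i j; apply: ord4P; apply: ord4P => //. Qed.

Lemma gmat_sg (R : realType) (A B C : 'rV[R]_4 -> R) q (i j : 'I_4) :
  gmat A B C q (sg i) (sg j) = gmat A B C q i j.
Proof. rewrite !mxE; move: i j; apply: ord4P; apply: ord4P => //. Qed.

Lemma gmat_sgl (R : realType) (A B C : 'rV[R]_4 -> R) q (i j : 'I_4) :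
  gmat A B C q (sg i) j = gmat A B C q i (sg j).
Proof. by rewrite -{1}(sgK j) gmat_sg. Qed.

Lemma gmatT (R : realType) (A B C : 'rV[R]_4 -> R) q : (gmat A B C q)^T = gmat A B C q.
Proof. by apply/matrixP => i j; rewrite mxE gmat_sym. Qed.

Lemma Pvec_E (R : realType) (z : 'rV[R]_4) k : Pvec z 0 k = z 0 (sg k).
Proof.
rewrite /Pvec mxE (eq_bigr (fun j => z 0 j * (j == sg k)%:R)) ?sum_sgl // => j _.
by rewrite Pmat_E eq_sg.
Qed.

Lemma sum3_eq0 {R : realType} {x y z : R} : 0 <= x -> 0 <= y -> 0 <= z ->
  x + y + z <= 0 -> x = 0 /\ y = 0 /\ z = 0.
Proof. move=> *; split; [|split]; lra. Qed.

Lemma posdef (R : realType) (A B C : 'rV[R]_4 -> R) p :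
  0 < B p -> B p < C p -> C p < A p ->
  forall v : 'rV[R]_4, v != 0 -> 0 < (v *m gmat A B C p *m v^T) 0 0.
Proof.
move=> hB hBC hCA v vn0.
rewrite !mxE sum4 !mxE !sum4 !mxE /=.
set a := v 0 o0; set b := v 0 o1; set c := v 0 o2; set d := v 0 o3.
set Q := (X in 0 < X).
have HQ : Q = (A p + 2 * B p + C p) / 4 * (a + b + c + d) ^+ 2
   + (A p - 2 * B p + C p) / 4 * (a - b + c - d) ^+ 2
   + (A p - C p) / 2 * ((a - c) ^+ 2 + (b - d) ^+ 2) by rewrite /Q; field.
case: (lerP Q 0) => // hle; exfalso.
have al : 0 < (A p + 2 * B p + C p) / 4 by apply: divr_gt0; lra.
have be : 0 < (A p - 2 * B p + C p) / 4 by apply: divr_gt0; lra.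
have ga : 0 < (A p - C p) / 2 by apply: divr_gt0; lra.
have s1 : 0 <= (a + b + c + d) ^+ 2 := sqr_ge0 _.
have s2 : 0 <= (a - b + c - d) ^+ 2 := sqr_ge0 _.
have s3 : 0 <= (a - c) ^+ 2 := sqr_ge0 _.
have s4 : 0 <= (b - d) ^+ 2 := sqr_ge0 _.
have p1 := mulr_ge0 (ltW al) s1.
have p2 := mulr_ge0 (ltW be) s2.
have p3 := mulr_ge0 (ltW ga) (addr_ge0 s3 s4).
rewrite HQ in hle.
have [q1 [q2 q3]] := sum3_eq0 p1 p2 p3 hle.
move/eqP: q1; rewrite mulf_eq0 gt_eqF //= => /eqP z1.
move/eqP: q2; rewrite mulf_eq0 gt_eqF //= => /eqP z2.
move/eqP: q3; rewrite mulf_eq0 gt_eqF //= => /eqP q3.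
have [z3 [z4 _]] := sum3_eq0 s3 s4 (lexx 0) (ltac:(by rewrite addr0 q3)).
move: z1 z2 z3 z4 => /eqP z1 /eqP z2 /eqP z3 /eqP z4; move: z1 z2 z3 z4; rewrite !sqrf_eq0 => /eqP z1 /eqP z2 /eqP z3 /eqP z4.
move/negP: vn0; apply; apply/eqP/matrixP => i j.
rewrite (ord1 i) mxE; move: j; apply: ord4P; rewrite -/a -/b -/c -/d; lra.
Qed.

Lemma gunit (R : realType) (A B C : 'rV[R]_4 -> R) p :
  0 < B p -> B p < C p -> C p < A p -> gmat A B C p \in unitmx.
Proof.
move=> h1 h2 h3; rewrite unitmxE unitfE; apply/negP => /det0P [v vn0 hv].
have := posdef h1 h2 h3 vn0; by rewrite hv mul0mx mxE ltxx.
Qed.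

Definition Dg (R : realType) (A B C : 'rV[R]_4 -> R) p (i m s : 'I_4) : R :=
  pd (fun q => gmat A B C q m s) i p.
Definition Eg (R : realType) (A B C : 'rV[R]_4 -> R) p (i m s : 'I_4) : R :=
  Dg A B C p i m s + Dg A B C p m i s - Dg A B C p s i m.

Lemma key1 (R : realType) (G : 'M[R]_4) (e : 'I_4 -> R) k :
  G \in unitmx -> G^T = G ->
  \sum_(l < 4) (2^-1 * \sum_(s < 4) invmx G l s * e s) * G l k = 2^-1 * e k.
Proof.
move=> hu hT.
under eq_bigr do rewrite -mulrA big_distrl /=.
rewrite -big_distrr /= exchange_big /=; congr (_ * _).
have h : forall s, \sum_(l < 4) invmx G l s * e s * G l k = e s * (s == k)%:R.
  move=> s; have := congr1 (fun M : 'M[R]_4 => M s k) (mulVmx hu).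
  rewrite -{1}hT -trmx_inv mxE !mxE => <-; rewrite big_distrr /=.
  by apply: eq_bigr => l _; rewrite mxE; ring.
under eq_bigr do rewrite h.
rewrite (bigD1 k) //= eqxx mulr1 big1 ?addr0 // => s /negbTE ->; by rewrite mulr0.
Qed.

Lemma Fcomp_E (R : realType) (A B C : 'rV[R]_4 -> R) p i j k :
  0 < B p -> B p < C p -> C p < A p ->
  Fcomp A B C p i j k = 2^-1 * (Eg A B C p i (sg j) k - Eg A B C p i j (sg k)).
Proof.
move=> h1 h2 h3.
have hu := gunit h1 h2 h3; have hT := gmatT A B C p.
rewrite /Fcomp.
have hn : forall l, nablaP A B C p i j l =
   Gamma A B C p l i (sg j) - Gamma A B C p (sg l) i j.
  move=> l; rewrite /nablaP.
  have -> : pd (fun _ => Pmat R j l) i p = 0 by exact: derive_cst.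
  rewrite add0r; congr (_ - _).
    by under eq_bigr do rewrite Pmat_E; rewrite sum_sgl.
  under eq_bigr do rewrite Pmat_E eq_sg.
  by rewrite sum_sgl.
under eq_bigr do rewrite hn mulrBl.
rewrite sumrB mulrBr; congr (_ - _).
  exact: (key1 (fun s => Eg A B C p i (sg j) s) k hu hT).
rewrite (reindex_inj (can_inj sgK)) /=.
under eq_bigr => l _ do rewrite sgK gmat_sgl.
exact: (key1 (fun s => Eg A B C p i j s) (sg k) hu hT).
Qed.

Lemma gfunE (R : realType) (A B C : 'rV[R]_4 -> R) (m s : 'I_4) :
  (fun q => gmat A B C q m s) =
  (fun q => match ((m + 4 - s) %% 4)%N with 0%N => A q | 2%N => C q | _ => B q end).
Proof. by apply: funext => q; rewrite mxE. Qed.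

Lemma comp (R : realType) (A B C : 'rV[R]_4 -> R) p :
  0 < B p -> B p < C p -> C p < A p -> forall i j k,
  Fcomp A B C p i j (sg k) + Fcomp A B C p j k (sg i) + Fcomp A B C p k i (sg j) = 0.
Proof.
move=> h1 h2 h3 i j k; rewrite !Fcomp_E // !sgK.
move: i j k; apply: ord4P; apply: ord4P; apply: ord4P;
  rewrite ?sg0 ?sg1 ?sg2 ?sg3 /Eg /Dg !gfunE /=;
  repeat match goal with |- context [pd ?f ?i p] => generalize (pd f i p); intro end;
  ring.
Qed.

Lemma cyc3 (R : realType) (f : 'I_4 -> 'I_4 -> 'I_4 -> R) :
  \sum_(a < 4) \sum_(b < 4) \sum_(c < 4) f a b c =
  \sum_(c < 4) \sum_(a < 4) \sum_(b < 4) f a b c.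
Proof.
under eq_bigr do rewrite exchange_big.
by rewrite exchange_big.
Qed.

Lemma FtenP (R : realType) (A B C : 'rV[R]_4 -> R) p (x y z : 'rV[R]_4) :
  Ften A B C p x y (Pvec z) =
  \sum_(i < 4) \sum_(j < 4) \sum_(k < 4)
     x 0 i * y 0 j * z 0 k * Fcomp A B C p i j (sg k).
Proof.
apply: eq_bigr => i _; apply: eq_bigr => j _.
rewrite (reindex_inj (can_inj sgK)) /=.
by apply: eq_bigr => k _; rewrite Pvec_E sgK.
Qed.

Lemma cyc (R : realType) (A B C : 'rV[R]_4 -> R) p :
  0 < B p -> B p < C p -> C p < A p ->
  forall x y z : 'rV[R]_4,
     Ften A B C p x y (Pvec z) + Ften A B C p y z (Pvec x)
     + Ften A B C p z x (Pvec y) = 0.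
Proof.
move=> h1 h2 h3 x y z.
rewrite !FtenP.
rewrite [X in _ + X + _]cyc3 [X in _ + _ + X]cyc3 [X in _ + _ + X]cyc3.
rewrite -!big_split /=; apply: big1 => i _.
rewrite -!big_split /=; apply: big1 => j _.
rewrite -!big_split /=; apply: big1 => k _.
have := comp h1 h2 h3 i j k.
set a := Fcomp A B C p i j (sg k); set b := Fcomp A B C p j k (sg i);
set c := Fcomp A B C p k i (sg j) => h.
have -> : c = - a - b by apply/eqP; rewrite -subr_eq0 -h; apply/eqP; ring.
ring.
Qed.

Lemma PP (R : realType) : Pmat R *m Pmat R = 1%:M.
Proof.
apply/matrixP => i j; rewrite !mxE.
under eq_bigr do rewrite !Pmat_E mulrC eq_sg.
rewrite sum_sgl (inj_eq (can_inj sgK)). by [].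
Qed.

Lemma Pn1 (R : realType) : Pmat R != 1%:M.
Proof.
apply/negP => /eqP h; move: (congr1 (fun M : 'M[R]_4 => M o0 o0) h).
rewrite Pmat_E sg0 mxE /= => /eqP; by rewrite eq_sym oner_eq0.
Qed.

Lemma PnN1 (R : realType) : Pmat R != - 1%:M.
Proof.
apply/negP => /eqP h; move: (congr1 (fun M : 'M[R]_4 => M o0 o0) h).
rewrite Pmat_E sg0 !mxE /= => /eqP; by rewrite eq_sym oppr_eq0 oner_eq0.
Qed.

Lemma Ptr (R : realType) : \tr (Pmat R) = 0.
Proof. by rewrite /mxtrace sum4 !Pmat_E sg0 sg1 sg2 sg3 /= !addr0. Qed.

Lemma PGP (R : realType) (A B C : 'rV[R]_4 -> R) p :
  Pmat R *m gmat A B C p *m (Pmat R)^T = gmat A B C p.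
Proof.
apply/matrixP => i j; rewrite mxE.
under eq_bigr do rewrite [X in _ * X]mxE Pmat_E.
rewrite sum_sgl mxE.
under eq_bigr do rewrite Pmat_E mulrC.
by rewrite sum_sgl gmat_sg.
Qed.

Theorem lemma3p1 (R : realType) (U : set 'rV[R]_4) (A B C : 'rV[R]_4 -> R) :
  open U ->
  smooth_on U A -> smooth_on U B -> smooth_on U C ->
  (forall p, U p -> 0 < B p /\ B p < C p /\ C p < A p) ->
  (* g is a Riemannian metric on U *)
  (forall p, U p -> (gmat A B C p)^T = gmat A B C p /\
     forall v : 'rV[R]_4, v != 0 -> 0 < (v *m gmat A B C p *m v^T) 0 0) /\
  (* P is an almost product structure compatible with g, tr P = 0 *)
  Pmat R *m Pmat R = 1%:M /\ Pmat R != 1%:M /\ Pmat R != - 1%:M /\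
  \tr (Pmat R) = 0 /\
  (forall p, U p -> Pmat R *m gmat A B C p *m (Pmat R)^T = gmat A B C p) /\
  (* class W1 (+) W2 *)
  (forall p, U p -> forall x y z : 'rV[R]_4,
     Ften A B C p x y (Pvec z) + Ften A B C p y z (Pvec x)
     + Ften A B C p z x (Pvec y) = 0).
Proof.
move=> _ _ _ _ hp.
split.
  move=> p /hp [h1 [h2 h3]]; split; first exact: gmatT.
  exact: posdef.
split; first exact: PP.
split; first exact: Pn1.
split; first exact: PnN1.
split; first exact: Ptr.
split; first by move=> p _; exact: PGP.
move=> p /hp [h1 [h2 h3]]; exact: cyc.
Qed.
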